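(* For odd $n\ge5$, let $\bar P_n$ denote the maximum of $\bar P(\mathsf{M}^{(1)},\mathsf{M}^{(2)})$ over all pairs of dichotomic measurements on the regular $n$-gon state space $\mathcal{S}_n$, and let $r_{2n}^2=\sec(\pi/(2n))$. Then, for every integer $m\ge1$: (i) if $n=4m+1$, $\bar P_n=\frac14\big[2+\cos(m\pi/n)+\sec(\tfrac{\pi}{2n})\sin(m\pi/n)\big]$; (ii) if $n=4m+3$, $\bar P_n=\frac14\big[2+\cos((m+1)\pi/n)+\sec(\tfrac{\pi}{2n})\sin((m+1)\pi/n)\big]$.
   Context: The regular $n$-gon state space $\mathcal{S}_n\subset\mathbb{R}^3$ is the convex hull of $s_j=(r_n\cos(2j\pi/n),\,r_n\sin(2j\pi/n),\,1)^T$, $j=1,\ldots,n$, with $r_n=\sqrt{\sec(\pi/n)}$. Effects are linear functionals $e$ on $\mathbb{R}^3$ with $0\le e\le1$ on $\mathcal{S}_n$; unit effect $u=(0,0,1)$; $\|f\|=\max_{s\in\mathcal{S}_n}|f(s)|$. A dichotomic measurement is a pair of effects $\mathsf{M}_+,\mathsf{M}_-$ with $\mathsf{M}_++\mathsf{M}_-=u$, and $\bar P(\mathsf{M}^{(1)},\mathsf{M}^{(2)})=\frac18\sum_{x,y\in\{+,-\}}\|\mathsf{M}^{(1)}_x+\mathsf{M}^{(2)}_y\|$. *)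

(* Defs.v *)
From Stdlib Require Import Reals Lra.
From Coquelicot Require Import Coquelicot.
Open Scope R_scope.

(* Points of R^3 and linear functionals on R^3 (identified with vectors via the dot product). *)
Definition vec3 : Type := (R * R * R)%type.

Definition dot (f x : vec3) : R :=
  let '(f1, f2, f3) := f in let '(x1, x2, x3) := x in f1 * x1 + f2 * x2 + f3 * x3.

Definition vadd (f g : vec3) : vec3 :=
  let '(f1, f2, f3) := f in let '(g1, g2, g3) := g in (f1 + g1, f2 + g2, f3 + g3).

Definition rn (n : nat) : R := sqrt (/ cos (PI / INR n)).

Definition vertex (n j : nat) : vec3 :=
  (rn n * cos (2 * INR j * PI / INR n), rn n * sin (2 * INR j * PI / INR n), 1).

Definition in_Sn (n : nat) (x : vec3) : Prop :=
  exists lam : nat -> R,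
    (forall k, 0 <= lam k) /\
    sum_f_R0 lam (n - 1) = 1 /\
    x = (sum_f_R0 (fun k => lam k * fst (fst (vertex n (S k)))) (n - 1),
         sum_f_R0 (fun k => lam k * snd (fst (vertex n (S k)))) (n - 1),
         sum_f_R0 (fun k => lam k * snd (vertex n (S k))) (n - 1)).

Definition fnorm (n : nat) (f : vec3) : R :=
  real (Lub_Rbar (fun y => exists s, in_Sn n s /\ y = Rabs (dot f s))).

Definition unit_effect : vec3 := (0, 0, 1).

Definition is_effect (n : nat) (e : vec3) : Prop :=
  forall s, in_Sn n s -> 0 <= dot e s <= 1.

Definition dichotomic (n : nat) (Mp Mm : vec3) : Prop :=
  is_effect n Mp /\ is_effect n Mm /\ vadd Mp Mm = unit_effect.

Definition Pbar (n : nat) (M1p M1m M2p M2m : vec3) : R :=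
  / 8 * (fnorm n (vadd M1p M2p) + fnorm n (vadd M1p M2m)
         + fnorm n (vadd M1m M2p) + fnorm n (vadd M1m M2m)).

Definition is_max_Pbar (n : nat) (V : R) : Prop :=
  (exists M1p M1m M2p M2m, dichotomic n M1p M1m /\ dichotomic n M2p M2m /\
      Pbar n M1p M1m M2p M2m = V) /\
  (forall M1p M1m M2p M2m, dichotomic n M1p M1m -> dichotomic n M2p M2m ->
      Pbar n M1p M1m M2p M2m <= V).

(* Main.v *)
Require Import Defs.
From Stdlib Require Import Reals.
From Coquelicot Require Import Coquelicot.
From Stdlib Require Import Lra Lia ZArith FunctionalExtensionality.
Open Scope R_scope.


Lemma cos_perN x (k : nat) : cos (x - 2 * INR k * PI) = cos x.
Proof. rewrite <- (cos_period (x - 2 * INR k * PI) k). f_equal; ring. Qed.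
Lemma sin_perN x (k : nat) : sin (x - 2 * INR k * PI) = sin x.
Proof. rewrite <- (sin_period (x - 2 * INR k * PI) k). f_equal; ring. Qed.

Lemma cos_perZ x (q : Z) : cos (x + 2 * IZR q * PI) = cos x.
Proof.
  destruct (Z.le_ge_cases 0 q) as [H|H].
  - replace q with (Z.of_nat (Z.to_nat q)) by lia.
    rewrite <- INR_IZR_INZ. apply cos_period.
  - replace q with (- Z.of_nat (Z.to_nat (- q)))%Z by lia.
    rewrite opp_IZR, <- INR_IZR_INZ.
    rewrite <- (cos_perN x (Z.to_nat (-q))). f_equal; ring.
Qed.
Lemma sin_perZ x (q : Z) : sin (x + 2 * IZR q * PI) = sin x.
Proof.
  destruct (Z.le_ge_cases 0 q) as [H|H].
  - replace q with (Z.of_nat (Z.to_nat q)) by lia.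
    rewrite <- INR_IZR_INZ. apply sin_period.
  - replace q with (- Z.of_nat (Z.to_nat (- q)))%Z by lia.
    rewrite opp_IZR, <- INR_IZR_INZ.
    rewrite <- (sin_perN x (Z.to_nat (-q))). f_equal; ring.
Qed.

Lemma KL (K : nat) (M : Z) : (1 <= K)%nat ->
  cos (IZR (2*M+1) * (PI / INR K)) <= cos (PI / INR K).
Proof.
  intros HK.
  assert (HKr : 1 <= INR K) by (apply (le_INR 1); lia).
  set (N := (2*M+1)%Z).
  set (K2 := (2 * Z.of_nat K)%Z).
  assert (HK2 : (K2 > 0)%Z) by (unfold K2; lia).
  pose proof (Z.div_mod N K2 ltac:(lia)) as Hdm.
  pose proof (Z.mod_pos_bound N K2 ltac:(lia)) as Hb.
  set (q := (N / K2)%Z) in *. set (r := (N mod K2)%Z) in *.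
  assert (Hr0 : (r <> 0)%Z).
  { intro E. unfold N, K2 in Hdm. rewrite E in Hdm. lia. }
  assert (E : IZR N * (PI / INR K) = IZR r * (PI / INR K) + 2 * IZR q * PI).
  { rewrite Hdm. unfold K2. rewrite plus_IZR, !mult_IZR, <- INR_IZR_INZ.
    field. lra. }
  rewrite E, cos_perZ.
  assert (PIp := PI_RGT_0).
  assert (H1 : 1 <= IZR r) by (apply IZR_le; lia).
  assert (Hp : 0 < PI / INR K) by (apply Rdiv_lt_0_compat; lra).
  assert (HpP : PI / INR K <= PI).
  { replace PI with (INR K * (PI / INR K)) at 2 by (field; lra).
    replace (PI / INR K) with (1 * (PI / INR K)) at 1 by ring.
    apply Rmult_le_compat_r; lra. }
  destruct (Z_le_gt_dec r (Z.of_nat K)) as [Hle|Hgt].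
  - assert (H2 : IZR r <= INR K) by (rewrite INR_IZR_INZ; apply IZR_le; lia).
    assert (H3 : IZR r * (PI / INR K) <= PI).
    { replace PI with (INR K * (PI / INR K)) at 2 by (field; lra).
      apply Rmult_le_compat_r; lra. }
    apply cos_decr_1; try lra.
    + apply Rmult_le_pos; lra.
    + replace (PI / INR K) with (1 * (PI / INR K)) at 1 by ring.
      apply Rmult_le_compat_r; lra.
  - assert (H2 : IZR (2 * Z.of_nat K - r) >= 1) by (apply Rle_ge, IZR_le; lia).
    assert (H3 : IZR (2 * Z.of_nat K - r) <= INR K) by (rewrite INR_IZR_INZ; apply IZR_le; lia).
    rewrite minus_IZR, mult_IZR, <- INR_IZR_INZ in H2, H3.
    replace (IZR r * (PI / INR K)) with (- ((2 * INR K - IZR r) * (PI / INR K)) + 2 * IZR 1 * PI)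
      by (simpl; field; lra).
    rewrite cos_perZ, cos_neg.
    assert (H4 : (2 * INR K - IZR r) * (PI / INR K) <= PI).
    { replace PI with (INR K * (PI / INR K)) at 2 by (field; lra).
      apply Rmult_le_compat_r; lra. }
    apply cos_decr_1; try lra.
    + apply Rmult_le_pos; lra.
    + replace (PI / INR K) with (1 * (PI / INR K)) at 1 by ring.
      apply Rmult_le_compat_r; lra.
Qed.


Definition w (n : nat) : R := PI / (2 * INR n).
Definition kap (n : nat) : R := / (1 + cos (2 * w n)).

Ltac zR := repeat progress (rewrite ?plus_IZR, ?minus_IZR, ?mult_IZR, ?opp_IZR, <- ?INR_IZR_INZ).

Lemma w_pos n : (1 <= n)%nat -> 0 < w n.
Proof. intros H. unfold w. assert (1 <= INR n) by (apply (le_INR 1); lia).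
  apply Rdiv_lt_0_compat; [apply PI_RGT_0| lra]. Qed.

Lemma PI_w n : (1 <= n)%nat -> PI = 2 * INR n * w n.
Proof. intros H. unfold w. assert (1 <= INR n) by (apply (le_INR 1); lia). field; lra. Qed.

Lemma w_small n : (3 <= n)%nat -> 2 * w n <= PI / 3.
Proof. intros H. unfold w. assert (3 <= INR n) by (pose proof (le_INR 3 n ltac:(lia)); simpl in *; lra).
  assert (PIp := PI_RGT_0).
  replace (2 * (PI / (2 * INR n))) with (PI / INR n) by (field; lra).
  apply Rmult_le_compat_l; [lra|]. apply Rinv_le_contravar; lra. Qed.

Lemma cosw_pos n : (3 <= n)%nat -> 0 < cos (w n).
Proof. intros H. pose proof (w_small n H). pose proof (w_pos n ltac:(lia)).
  apply cos_gt_0; lra. Qed.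

Lemma cos2w_pos n : (3 <= n)%nat -> 0 < cos (2 * w n).
Proof. intros H. pose proof (w_small n H). pose proof (w_pos n ltac:(lia)).
  apply cos_gt_0; lra. Qed.

Lemma sinw_pos n : (3 <= n)%nat -> 0 < sin (w n).
Proof. intros H. pose proof (w_small n H). pose proof (w_pos n ltac:(lia)).
  apply sin_gt_0; lra. Qed.

Lemma one_cos2w n : 1 + cos (2 * w n) = 2 * cos (w n) ^ 2.
Proof. rewrite cos_2a_cos. ring. Qed.

Lemma kap_pos n : (3 <= n)%nat -> 0 < kap n.
Proof. intros H. unfold kap. pose proof (cos2w_pos n H). apply Rinv_0_lt_compat; lra. Qed.

Lemma rn_pos n : (3 <= n)%nat -> 0 < rn n.
Proof. intros H. unfold rn. apply sqrt_lt_R0. apply Rinv_0_lt_compat.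
  pose proof (cos2w_pos n H). unfold w in H0.
  assert (1 <= INR n) by (apply (le_INR 1); lia).
  replace (PI / INR n) with (2 * (PI / (2 * INR n))) by (field; lra). exact H0. Qed.

Lemma KLw1 n (M : Z) : (1 <= n)%nat -> cos (IZR (2*M+1) * w n) <= cos (w n).
Proof. intros H. pose proof (KL (2*n) M ltac:(lia)) as K.
  unfold w. rewrite mult_INR in K. exact K. Qed.

Lemma KLw2 n (M : Z) : (1 <= n)%nat -> cos (IZR (2*(2*M+1)) * w n) <= cos (2 * w n).
Proof. intros H. pose proof (KL n M H) as K.
  assert (1 <= INR n) by (apply (le_INR 1); lia).
  unfold w. rewrite mult_IZR.
  replace (2 * IZR (2 * M + 1) * (PI / (2 * INR n))) with (IZR (2 * M + 1) * (PI / INR n)) by (field; lra).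
  replace (2 * (PI / (2 * INR n))) with (PI / INR n) by (field; lra). exact K. Qed.

Lemma KLodd n (N : Z) : (1 <= n)%nat -> Z.odd N = true -> cos (IZR N * w n) <= cos (w n).
Proof. intros H HN. destruct (Z.Even_or_Odd N) as [[M E]|[M E]]; subst N.
  - rewrite Z.odd_mul in HN. simpl in HN. discriminate.
  - apply KLw1; auto. Qed.

Lemma KLodd2 n (N : Z) : (1 <= n)%nat -> Z.odd N = true -> cos (IZR (2 * N) * w n) <= cos (2 * w n).
Proof. intros H HN. destruct (Z.Even_or_Odd N) as [[M E]|[M E]]; subst N.
  - rewrite Z.odd_mul in HN. simpl in HN. discriminate.
  - apply KLw2; auto. Qed.

Definition val (n : nat) (g : vec3) (a : Z) : R :=
  let '(g1, g2, g3) := g in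
  g1 * (rn n * cos (IZR (4 * a) * w n)) + g2 * (rn n * sin (IZR (4 * a) * w n)) + g3.

Lemma dot_vertex n g k : (1 <= n)%nat -> dot g (vertex n k) = val n g (Z.of_nat k).
Proof. intros H. destruct g as [[g1 g2] g3]. unfold dot, vertex, val.
  assert (1 <= INR n) by (apply (le_INR 1); lia).
  replace (2 * INR k * PI / INR n) with (IZR (4 * Z.of_nat k) * w n).
  - ring.
  - unfold w. zR. field. lra. Qed.

Lemma val_shift n g a q : (1 <= n)%nat -> val n g (a + Z.of_nat n * q) = val n g a.
Proof. intros H. destruct g as [[g1 g2] g3]. unfold val.
  replace (IZR (4 * (a + Z.of_nat n * q)) * w n) with (IZR (4 * a) * w n + 2 * IZR q * PI).
  - rewrite cos_perZ, sin_perZ. reflexivity.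
  - rewrite (PI_w n H). zR. ring. Qed.

Lemma vred n g a : (1 <= n)%nat -> exists k, (k < n)%nat /\ val n g a = val n g (Z.of_nat (S k)).
Proof. intros H.
  pose proof (Z.div_mod a (Z.of_nat n) ltac:(lia)) as Hdm.
  pose proof (Z.mod_pos_bound a (Z.of_nat n) ltac:(lia)) as Hb.
  set (q := (a / Z.of_nat n)%Z) in *. set (r := (a mod Z.of_nat n)%Z) in *.
  destruct (Z.eq_dec r 0) as [E|E].
  - exists (n - 1)%nat. split; [lia|].
    replace (Z.of_nat (S (n-1))) with (Z.of_nat n) by lia.
    rewrite Hdm, E. rewrite <- (val_shift n g (Z.of_nat n) (q - 1) H). f_equal. ring.
  - exists (Z.to_nat r - 1)%nat. split; [lia|].
    replace (Z.of_nat (S (Z.to_nat r - 1))) with r by lia.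
    rewrite Hdm. rewrite <- (val_shift n g r q H). f_equal. ring. Qed.

Lemma val_all n g : (1 <= n)%nat ->
  (forall k, (k < n)%nat -> 0 <= val n g (Z.of_nat (S k)) <= 1) -> forall a, 0 <= val n g a <= 1.
Proof. intros H Hk a. destruct (vred n g a H) as [k [Hk1 ->]]. auto. Qed.


Lemma polar x y : exists rho phi, 0 <= rho /\ x = rho * cos phi /\ y = rho * sin phi.
Proof.
  set (rho := sqrt (x*x + y*y)).
  assert (Hr : 0 <= rho) by apply sqrt_pos.
  assert (Hr2 : rho * rho = x*x + y*y) by (apply sqrt_sqrt; nra).
  clearbody rho.
  destruct (Req_dec rho 0) as [E|E].
  - exists 0, 0. rewrite E in Hr2. split; [lra|]. split; nra.
  - assert (Hrp : 0 < rho) by lra.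
    set (u := x / rho).
    assert (Hu : -1 <= u <= 1).
    { unfold u. split.
      - apply (Rmult_le_reg_r rho); auto. replace (x / rho * rho) with x by (field; lra). nra.
      - apply (Rmult_le_reg_r rho); auto. replace (x / rho * rho) with x by (field; lra). nra. }
    assert (Hs : sqrt (1 - u²) = Rabs y / rho).
    { replace (1 - u²) with ((Rabs y / rho)²).
      - apply sqrt_Rsqr. apply Rdiv_le_0_compat; [apply Rabs_pos| lra].
      - assert (Hyy : Rabs y * Rabs y = y * y) by (rewrite <- Rabs_mult; apply Rabs_pos_eq; nra).
        unfold u, Rsqr.
        replace (Rabs y / rho * (Rabs y / rho)) with (y * y / (rho * rho)) by (rewrite <- Hyy; field; lra).
        replace (x / rho * (x / rho)) with (x * x / (rho * rho)) by (field; lra).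
        rewrite Hr2. field. intro Z. apply E. nra. }
    destruct (Rle_dec 0 y) as [Hy|Hy].
    + exists rho, (acos u). split; auto. rewrite cos_acos, sin_acos by auto.
      rewrite Hs, Rabs_pos_eq by auto. unfold u. split; field; lra.
    + exists rho, (- acos u). split; auto. rewrite cos_neg, sin_neg, cos_acos, sin_acos by auto.
      rewrite Hs, Rabs_left by lra. unfold u. split; field; lra.
Qed.

Lemma cos_mPI x : cos (x - PI) = - cos x.
Proof. rewrite <- neg_cos. replace (x - PI) with ((x + PI) + 2 * IZR (-1) * PI) by (simpl; ring).
  apply cos_perZ. Qed.

Lemma sin_id b t X : sin (b - t) * cos X + sin t * cos (X - b) = sin b * cos (X - t).
Proof. rewrite sin_minus, !cos_minus. ring. Qed.

Lemma sector n h e1 e2 e3 : n = (2*h+1)%nat -> (1 <= h)%nat ->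
  (forall a, 0 <= val n (e1, e2, e3) a <= 1) ->
  exists p la mu, 0 <= la /\ 0 <= mu /\ la + mu <= 1 /\
    forall A, rn n * (e1 * cos A + e2 * sin A) =
      kap n * (la * cos (A - IZR (2*p) * w n) + mu * cos (A - IZR (2*p+2) * w n)).
Proof.
  intros Hn Hh Hv.
  assert (Hn3 : (3 <= n)%nat) by lia.
  destruct (polar e1 e2) as [rho [phi [Hr [E1 E2]]]].
  pose proof (w_pos n ltac:(lia)) as Wp.
  pose proof (w_small n Hn3) as Ws.
  pose proof (PI_w n ltac:(lia)) as HPI.
  pose proof (rn_pos n Hn3) as Hrn.
  pose proof (kap_pos n Hn3) as Hk.
  pose proof (cosw_pos n Hn3) as Hcw.
  pose proof (sinw_pos n Hn3) as Hsw.
  assert (HnR : INR n = 2 * INR h + 1) by (subst n; rewrite plus_INR, mult_INR; simpl; ring).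
  set (W := w n) in *.
  set (p := (up (phi / (2*W)) - 1)%Z).
  assert (Hp1 : IZR p <= phi / (2*W) < IZR p + 1).
  { unfold p. rewrite minus_IZR. pose proof (archimed (phi / (2*W))). simpl. lra. }
  set (tau := phi - IZR (2*p) * W).
  assert (Ht : 0 <= tau < 2 * W).
  { unfold tau. rewrite mult_IZR. destruct Hp1 as [Hp1 Hp2].
    apply (Rmult_le_compat_r (2*W)) in Hp1; [|lra].
    apply (Rmult_lt_compat_r (2*W)) in Hp2; [|lra].
    replace (phi / (2 * W) * (2 * W)) with phi in * by (field; lra). simpl. lra. }
  assert (Hphi : phi = IZR (2*p) * W + tau) by (unfold tau; ring).
  assert (Hc : rn n * rho * (2 * cos W * cos (tau - W)) <= 1).
  { assert (Hf : cos tau + cos (2*W - tau) = 2 * cos W * cos (tau - W)).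
    { rewrite form1. replace ((tau - (2 * W - tau)) / 2) with (tau - W) by field.
      replace ((tau + (2 * W - tau)) / 2) with W by field. ring. }
    assert (Hdiff : forall a b, val n (e1,e2,e3) a - val n (e1,e2,e3) b =
       rn n * rho * (cos (IZR (4*a) * W - phi) - cos (IZR (4*b) * W - phi))).
    { intros a b. unfold val. fold W. rewrite E1, E2, !cos_minus. ring. }
    destruct (Z.Even_or_Odd p) as [[a0 Ha]|[a0 Ha]].
    - pose proof (Hv a0) as Va. pose proof (Hv (a0 - Z.of_nat h)%Z) as Vb.
      pose proof (Hdiff a0 (a0 - Z.of_nat h)%Z) as D.
      replace (IZR (4 * a0) * W - phi) with (- tau) in D
        by (rewrite Hphi, Ha; zR; ring).
      replace (IZR (4 * (a0 - Z.of_nat h)) * W - phi) with ((2 * W - tau) - PI) in D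
        by (rewrite Hphi, Ha, HPI, HnR; zR; ring).
      rewrite cos_neg, cos_mPI in D. rewrite <- Hf. nra.
    - pose proof (Hv (a0 + 1)%Z) as Va. pose proof (Hv (a0 - Z.of_nat h)%Z) as Vb.
      pose proof (Hdiff (a0 + 1)%Z (a0 - Z.of_nat h)%Z) as D.
      replace (IZR (4 * (a0 + 1)) * W - phi) with (2 * W - tau) in D
        by (rewrite Hphi, Ha; zR; ring).
      replace (IZR (4 * (a0 - Z.of_nat h)) * W - phi) with (- (tau + PI)) in D
        by (rewrite Hphi, Ha, HPI, HnR; zR; ring).
      rewrite cos_neg, neg_cos in D. rewrite <- Hf. nra. }
  assert (Hs2 : 0 < sin (2 * W)) by (apply sin_gt_0; lra).
  assert (Hs2e : sin (2 * W) = 2 * sin W * cos W) by apply sin_2a.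
  assert (Hke : kap n = / (2 * cos W ^ 2)) by (unfold kap; rewrite (one_cos2w n); reflexivity).
  exists p, (rn n * rho * sin (2*W - tau) / (kap n * sin (2*W))),
            (rn n * rho * sin tau / (kap n * sin (2*W))).
  assert (Hst : 0 <= sin tau) by (apply sin_ge_0; lra).
  assert (Hst2 : 0 <= sin (2*W - tau)) by (apply sin_ge_0; lra).
  assert (Hkp : 0 < kap n * sin (2 * W)) by (apply Rmult_lt_0_compat; lra).
  split; [|split; [|split]].
  - apply Rdiv_le_0_compat; [|lra]. apply Rmult_le_pos; [nra|lra].
  - apply Rdiv_le_0_compat; [|lra]. apply Rmult_le_pos; [nra|lra].
  - assert (Hf3 : sin (2*W - tau) + sin tau = 2 * sin W * cos (tau - W)).
    { rewrite form3. replace ((2 * W - tau - tau) / 2) with (- (tau - W)) by field.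
      replace ((2 * W - tau + tau) / 2) with W by field. rewrite cos_neg. ring. }
    replace (rn n * rho * sin (2 * W - tau) / (kap n * sin (2 * W)) +
             rn n * rho * sin tau / (kap n * sin (2 * W)))
      with (rn n * rho * (2 * cos W * cos (tau - W))); [lra|].
    rewrite Hs2e, Hke.
    replace (rn n * rho * sin (2 * W - tau) / (/ (2 * cos W ^ 2) * (2 * sin W * cos W)) +
      rn n * rho * sin tau / (/ (2 * cos W ^ 2) * (2 * sin W * cos W)))
     with (rn n * rho * (sin (2 * W - tau) + sin tau) * cos W / sin W) by (field; lra).
    rewrite Hf3. field. lra.
  - intros A.
    rewrite E1, E2.
    replace (A - IZR (2 * p + 2) * W) with ((A - IZR (2*p) * W) - 2 * W) by (zR; ring).
    replace (kap n * (rn n * rho * sin (2 * W - tau) / (kap n * sin (2 * W)) * cos (A - IZR (2 * p) * W) +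
       rn n * rho * sin tau / (kap n * sin (2 * W)) * cos (A - IZR (2 * p) * W - 2 * W)))
    with (rn n * rho / sin (2 * W) * (sin (2 * W - tau) * cos (A - IZR (2 * p) * W) +
       sin tau * cos (A - IZR (2 * p) * W - 2 * W))) by (field; lra).
    rewrite sin_id.
    replace (A - IZR (2 * p) * W - tau) with (A - phi) by (rewrite Hphi; ring).
    rewrite cos_minus. field. lra.
Qed.


Definition Gs (n ms : nat) : R :=
  cos (2 * INR ms * w n) + sin (2 * INR ms * w n) / cos (w n).

Lemma sin_as_cos x : sin x = cos (x - PI / 2).
Proof. rewrite <- cos_shift, <- cos_neg. f_equal. ring. Qed.
Lemma msin_as_cos x : - sin x = cos (x + PI / 2).
Proof. rewrite <- sin_neg, sin_as_cos. rewrite <- cos_neg. f_equal. ring. Qed.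
Lemma mcos_as_cos x : - cos x = cos (x - PI).
Proof. rewrite cos_mPI. reflexivity. Qed.

Lemma B1 n (N z : Z) : (1 <= n)%nat -> N = (2*z+1)%Z -> cos (IZR N * w n) <= cos (w n).
Proof. intros H E. subst N. apply KLw1; auto. Qed.

Lemma B2 n (A B z : Z) : (1 <= n)%nat -> (A + B = 2*z+1)%Z ->
  cos (IZR (2 * A) * w n) + cos (IZR (2 * B) * w n) <= 1 + cos (2 * w n).
Proof. intros Hn HAB.
  destruct (Z.Even_or_Odd A) as [[a E]|[a E]].
  - replace B with (2 * (z - a) + 1)%Z by lia.
    pose proof (KLw2 n (z - a) Hn). pose proof (COS_bound (IZR (2 * A) * w n)). lra.
  - subst A. pose proof (KLw2 n a Hn). pose proof (COS_bound (IZR (2 * B) * w n)). lra.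
Qed.

Ltac angle HPI := rewrite ?HPI; zR; field.

Lemma K1even n h (s i j : Z) : n = (2*h+1)%nat ->
  cos (IZR (4*i - 2*s) * w n) - cos (IZR (4*j - 2*s) * w n) <= 1 + cos (2 * w n).
Proof. intros Hn. pose proof (PI_w n ltac:(lia)) as HPI.
  assert (HnR : INR n = 2 * INR h + 1) by (subst n; rewrite plus_INR, mult_INR; simpl; ring).
  rewrite HnR in HPI.
  unfold Rminus at 1. rewrite mcos_as_cos.
  replace (IZR (4*i - 2*s) * w n) with (IZR (2 * (2*i - s)) * w n) by (zR; ring).
  replace (IZR (4*j - 2*s) * w n - PI) with (IZR (2 * (2*j - s - 2 * Z.of_nat h - 1)) * w n) by angle HPI.
  apply (B2 n _ _ (i + j - s - Z.of_nat h - 1)); lia.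
Qed.

Lemma K2even n h (s k l : Z) : n = (2*h+1)%nat ->
  sin (IZR (4*k - 2*s) * w n) - sin (IZR (4*l - 2*s) * w n) <= 2 * cos (w n).
Proof. intros Hn. pose proof (PI_w n ltac:(lia)) as HPI.
  assert (HnR : INR n = 2 * INR h + 1) by (subst n; rewrite plus_INR, mult_INR; simpl; ring).
  rewrite HnR in HPI.
  unfold Rminus at 1. rewrite sin_as_cos, msin_as_cos.
  replace (IZR (4*k - 2*s) * w n - PI / 2) with (IZR (4*k - 2*s - 2 * Z.of_nat h - 1) * w n) by angle HPI.
  replace (IZR (4*l - 2*s) * w n + PI / 2) with (IZR (4*l - 2*s + 2 * Z.of_nat h + 1) * w n) by angle HPI.
  pose proof (B1 n (4*k - 2*s - 2 * Z.of_nat h - 1) ((2*k - s - Z.of_nat h - 1)) ltac:(lia) ltac:(lia)).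
  pose proof (B1 n (4*l - 2*s + 2 * Z.of_nat h + 1) ((2*l - s + Z.of_nat h)) ltac:(lia) ltac:(lia)).
  lra.
Qed.

Lemma K1odd n h (s i j : Z) : n = (2*h+1)%nat ->
  cos (IZR (4*i - (2*s+1)) * w n) - cos (IZR (4*j - (2*s+1)) * w n) <= 2 * cos (w n).
Proof. intros Hn. pose proof (PI_w n ltac:(lia)) as HPI.
  assert (HnR : INR n = 2 * INR h + 1) by (subst n; rewrite plus_INR, mult_INR; simpl; ring).
  rewrite HnR in HPI.
  unfold Rminus at 1. rewrite mcos_as_cos.
  replace (IZR (4*j - (2*s+1)) * w n - PI) with (IZR (4*j - 2*s - 1 - 4 * Z.of_nat h - 2) * w n) by angle HPI.
  pose proof (B1 n (4*i - (2*s+1)) ((2*i - s - 1)) ltac:(lia) ltac:(lia)).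
  pose proof (B1 n (4*j - 2*s - 1 - 4 * Z.of_nat h - 2) ((2*j - s - 2 * Z.of_nat h - 2)) ltac:(lia) ltac:(lia)).
  lra.
Qed.

Lemma K2odd n h (s k l : Z) : n = (2*h+1)%nat ->
  sin (IZR (4*k - (2*s+1)) * w n) - sin (IZR (4*l - (2*s+1)) * w n) <= 1 + cos (2 * w n).
Proof. intros Hn. pose proof (PI_w n ltac:(lia)) as HPI.
  assert (HnR : INR n = 2 * INR h + 1) by (subst n; rewrite plus_INR, mult_INR; simpl; ring).
  rewrite HnR in HPI.
  unfold Rminus at 1. rewrite sin_as_cos, msin_as_cos.
  replace (IZR (4*k - (2*s+1)) * w n - PI / 2) with (IZR (2 * (2*k - s - Z.of_nat h - 1)) * w n) by angle HPI.
  replace (IZR (4*l - (2*s+1)) * w n + PI / 2) with (IZR (2 * (2*l - s + Z.of_nat h)) * w n) by angle HPI.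
  apply (B2 n _ _ (k + l - s - 1)); lia.
Qed.


Lemma sin_le_cos H : 0 <= H -> H <= PI / 4 -> sin H <= cos H.
Proof. intros H0 H1. rewrite <- cos_shift. pose proof PI_RGT_0.
  apply cos_decr_1; lra. Qed.

Lemma key_ineq y : 0 <= y -> y <= PI / 4 ->
  cos (PI / 4 + y) <= cos (2 * y) * sin (PI / 4 + y).
Proof. intros H0 H1.
  rewrite cos_plus, sin_plus, sin_cos_PI4, cos_2a.
  pose proof (sin_le_cos y H0 H1).
  assert (0 <= sin y) by (apply sin_ge_0; pose proof PI_RGT_0; lra).
  pose proof (sin2_cos2 y). unfold Rsqr in H3.
  assert (0 < cos (PI / 4)) by (rewrite cos_PI4; apply Rdiv_lt_0_compat; [lra| apply sqrt_lt_R0; lra]).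
  set (c := cos y) in *. set (s := sin y) in *. set (k := cos (PI/4)) in *.
  assert (E : (c*c - s*s) * (k * c + k * s) - (k * c - k * s) = k * (c - s) * ((c + s) * (c + s) - (s * s + c * c)))
    by (rewrite H3; ring).
  replace ((c + s) * (c + s) - (s * s + c * c)) with (2 * s * c) in E by ring.
  assert (0 <= k * (c - s) * (2 * s * c)).
  { apply Rmult_le_pos. apply Rmult_le_pos; lra. assert (0 <= c) by lra. nra. }
  lra.
Qed.

Lemma lin_W a b W : 0 < W -> a <= b -> a * W <= b * W.
Proof. intros. apply Rmult_le_compat_r; lra. Qed.

Lemma FT_base n h ms t : n = (2*h+1)%nat -> (1 <= h)%nat -> (4*ms <= n+1)%nat -> (n <= 4*ms+1)%nat -> (t <= h)%nat ->
  cos (2 * INR t * w n) + sin (2 * INR t * w n) / cos (w n) <= Gs n ms.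
Proof.
  intros Hn Hh H1 H2 Ht. unfold Gs.
  assert (Hn3 : (3 <= n)%nat) by lia.
  pose proof (w_pos n ltac:(lia)) as Wp.
  pose proof (PI_w n ltac:(lia)) as HPI.
  pose proof (cosw_pos n Hn3) as Hc.
  assert (HnR : INR n = 2 * INR h + 1) by (subst n; rewrite plus_INR, mult_INR; simpl; ring).
  assert (Hc1 : cos (w n) <= 1) by apply COS_bound.
  set (W := w n) in *. set (c := cos W) in *.
  assert (Hdiff : cos (2 * INR ms * W) + sin (2 * INR ms * W) / c - (cos (2 * INR t * W) + sin (2 * INR t * W) / c)
     = 2 * sin ((INR ms - INR t) * W) * (cos ((INR ms + INR t) * W) / c - sin ((INR ms + INR t) * W))).
  { replace (cos (2 * INR ms * W) + sin (2 * INR ms * W) / c - (cos (2 * INR t * W) + sin (2 * INR t * W) / c))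
      with ((cos (2 * INR ms * W) - cos (2 * INR t * W)) + (sin (2 * INR ms * W) - sin (2 * INR t * W)) / c)
      by (field; lra).
    rewrite form2, form4.
    replace ((2 * INR ms * W - 2 * INR t * W) / 2) with ((INR ms - INR t) * W) by field.
    replace ((2 * INR ms * W + 2 * INR t * W) / 2) with ((INR ms + INR t) * W) by field.
    field. lra. }
  assert (HmsR : 4 * INR ms <= INR n + 1).
  { replace (4 * INR ms) with (INR (4*ms)) by (rewrite mult_INR; simpl; ring).
    replace (INR n + 1) with (INR (n+1)) by (rewrite plus_INR; simpl; ring). apply le_INR; lia. }
  assert (HmsR2 : INR n <= 4 * INR ms + 1).
  { replace (4 * INR ms + 1) with (INR (4*ms+1)) by (rewrite plus_INR, mult_INR; simpl; ring). apply le_INR; lia. }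
  assert (HtR : INR t <= INR h) by (apply le_INR; lia).
  assert (Ht0 : 0 <= INR t) by apply pos_INR.
  assert (Hms0 : 0 <= INR ms) by apply pos_INR.
  destruct (Nat.lt_trichotomy t ms) as [Hlt|[Heq|Hgt]].
  - assert (HtR2 : INR t + 1 <= INR ms) by (rewrite <- S_INR; apply le_INR; lia).
    assert (Hs : 0 <= sin ((INR ms - INR t) * W)).
    { apply sin_ge_0. apply Rmult_le_pos; lra. rewrite HPI. apply lin_W; lra. }
    assert (HH : 0 <= (INR ms + INR t) * W <= PI / 4).
    { split. apply Rmult_le_pos; lra. rewrite HPI.
      replace (2 * INR n * W / 4) with ((INR n / 2) * W) by field. apply lin_W; lra. }
    pose proof (sin_le_cos _ (proj1 HH) (proj2 HH)).
    assert (0 <= cos ((INR ms + INR t) * W)) by (apply cos_ge_0; pose proof PI_RGT_0; lra).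
    assert (cos ((INR ms + INR t) * W) <= cos ((INR ms + INR t) * W) / c).
    { apply (Rmult_le_reg_r c); auto. replace (cos ((INR ms + INR t) * W) / c * c) with (cos ((INR ms + INR t) * W)) by (field; lra). nra. }
    assert (0 <= 2 * sin ((INR ms - INR t) * W) * (cos ((INR ms + INR t) * W) / c - sin ((INR ms + INR t) * W))).
    { apply Rmult_le_pos; lra. }
    lra.
  - subst t. lra.
  - assert (HtR2 : INR ms + 1 <= INR t) by (rewrite <- S_INR; apply le_INR; lia).
    assert (Hs : sin ((INR ms - INR t) * W) <= 0).
    { rewrite <- (Ropp_involutive ((INR ms - INR t) * W)), sin_neg.
      assert (0 <= sin (- ((INR ms - INR t) * W))); [|lra].
      replace (- ((INR ms - INR t) * W)) with ((INR t - INR ms) * W) by ring.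
      apply sin_ge_0. apply Rmult_le_pos; lra. rewrite HPI. apply lin_W; lra. }
    set (y := W / 2).
    set (H := (INR ms + INR t) * W).
    assert (Hy : 0 <= y <= PI / 4).
    { unfold y; split; [lra|]; rewrite HPI.
      replace (2 * INR n * W / 4) with ((INR n / 2) * W) by field.
      replace (W / 2) with ((1/2) * W) by field. apply lin_W; lra. }
    assert (HH1 : PI / 4 + y <= H).
    { unfold H, y; rewrite HPI.
      replace (2 * INR n * W / 4 + W / 2) with ((INR n / 2 + 1/2) * W) by field. apply lin_W; lra. }
    assert (HH2 : H <= PI / 2).
    { unfold H; rewrite HPI.
      replace (2 * INR n * W / 2) with (INR n * W) by field. apply lin_W; lra. }
    assert (E1 : cos H <= cos (PI / 4 + y)) by (apply cos_decr_1; pose proof PI_RGT_0; lra).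
    assert (E2 : sin (PI / 4 + y) <= sin H) by (apply sin_incr_1; pose proof PI_RGT_0; lra).
    pose proof (key_ineq y (proj1 Hy) (proj2 Hy)) as E3.
    replace (2 * y) with W in E3 by (unfold y; field).
    fold c in E3.
    assert (0 <= sin (PI / 4 + y)) by (apply sin_ge_0; pose proof PI_RGT_0; lra).
    assert (cos H / c - sin H <= 0).
    { assert (cos H <= c * sin H).
      { apply (Rle_trans _ _ _ E1). apply (Rle_trans _ _ _ E3). apply Rmult_le_compat_l; lra. }
      replace (cos H / c - sin H) with ((cos H - c * sin H) / c) by (field; lra).
      apply Rmult_le_0_r; [lra| left; apply Rinv_0_lt_compat; lra]. }
    assert (0 <= 2 * sin ((INR ms - INR t) * W) * (cos H / c - sin H)).
    { replace (2 * sin ((INR ms - INR t) * W) * (cos H / c - sin H)) with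
        (2 * (- sin ((INR ms - INR t) * W)) * (- (cos H / c - sin H))) by ring.
      apply Rmult_le_pos; lra. }
    fold H in Hdiff. lra.
Qed.


Lemma abs_shift x q : Rabs (cos (x + IZR q * PI)) = Rabs (cos x) /\ Rabs (sin (x + IZR q * PI)) = Rabs (sin x).
Proof.
  destruct (Z.Even_or_Odd q) as [[a E]|[a E]]; subst q.
  - replace (x + IZR (2 * a) * PI) with (x + 2 * IZR a * PI) by (zR; ring).
    rewrite cos_perZ, sin_perZ. auto.
  - replace (x + IZR (2 * a + 1) * PI) with ((x + PI) + 2 * IZR a * PI) by (zR; ring).
    rewrite cos_perZ, sin_perZ, neg_cos, neg_sin, !Rabs_Ropp. auto.
Qed.

Lemma FT_even n h ms (t : Z) : n = (2*h+1)%nat -> (1 <= h)%nat -> (4*ms <= n+1)%nat -> (n <= 4*ms+1)%nat ->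
  Rabs (cos (IZR (2*t) * w n)) + Rabs (sin (IZR (2*t) * w n)) / cos (w n) <= Gs n ms.
Proof.
  intros Hn Hh H1 H2.
  assert (Hn3 : (3 <= n)%nat) by lia.
  pose proof (w_pos n ltac:(lia)) as Wp.
  pose proof (PI_w n ltac:(lia)) as HPI.
  pose proof (cosw_pos n Hn3) as Hc.
  assert (HnR : INR n = 2 * INR h + 1) by (subst n; rewrite plus_INR, mult_INR; simpl; ring).
  pose proof (Z.div_mod t (Z.of_nat n) ltac:(lia)) as Hdm.
  pose proof (Z.mod_pos_bound t (Z.of_nat n) ltac:(lia)) as Hb.
  set (q := (t / Z.of_nat n)%Z) in *. set (r := (t mod Z.of_nat n)%Z) in *.
  replace (IZR (2 * t) * w n) with (IZR (2 * r) * w n + IZR q * PI) by (rewrite Hdm, HPI; zR; ring).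
  destruct (abs_shift (IZR (2 * r) * w n) q) as [-> ->].
  set (W := w n) in *.
  destruct (Z_le_gt_dec r (Z.of_nat h)) as [Hle|Hgt].
  - set (tn := Z.to_nat r).
    replace (IZR (2 * r) * W) with (2 * INR tn * W) by (unfold tn; rewrite INR_IZR_INZ, Z2Nat.id by lia; zR; ring).
    assert (HtR : INR tn <= INR h) by (apply le_INR; lia).
    assert (0 <= INR tn) by apply pos_INR.
    assert (HA : 0 <= 2 * INR tn * W <= PI / 2).
    { split. apply Rmult_le_pos; lra. rewrite HPI. replace (2 * INR n * W / 2) with (INR n * W) by field.
      apply lin_W; lra. }
    rewrite Rabs_pos_eq by (apply cos_ge_0; pose proof PI_RGT_0; lra).
    rewrite Rabs_pos_eq by (apply sin_ge_0; pose proof PI_RGT_0; lra).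
    apply (FT_base n h); auto. lia.
  - set (tn := Z.to_nat (Z.of_nat n - r)).
    replace (IZR (2 * r) * W) with (PI - 2 * INR tn * W) by (unfold tn; rewrite INR_IZR_INZ, Z2Nat.id by lia; rewrite HPI; zR; ring).
    rewrite Rtrigo_facts.cos_pi_minus, sin_PI_x, Rabs_Ropp.
    assert (HtR : INR tn <= INR h) by (apply le_INR; lia).
    assert (0 <= INR tn) by apply pos_INR.
    assert (HA : 0 <= 2 * INR tn * W <= PI / 2).
    { split. apply Rmult_le_pos; lra. rewrite HPI. replace (2 * INR n * W / 2) with (INR n * W) by field.
      apply lin_W; lra. }
    rewrite Rabs_pos_eq by (apply cos_ge_0; pose proof PI_RGT_0; lra).
    rewrite Rabs_pos_eq by (apply sin_ge_0; pose proof PI_RGT_0; lra).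
    apply (FT_base n h); auto. lia.
Qed.

Lemma FT_odd n h ms (t : Z) : n = (2*h+1)%nat -> (1 <= h)%nat -> (4*ms <= n+1)%nat -> (n <= 4*ms+1)%nat ->
  Rabs (cos (IZR (2*t+1) * w n)) / cos (w n) + Rabs (sin (IZR (2*t+1) * w n)) <= Gs n ms.
Proof.
  intros Hn Hh H1 H2.
  pose proof (PI_w n ltac:(lia)) as HPI.
  assert (HnR : INR n = 2 * INR h + 1) by (subst n; rewrite plus_INR, mult_INR; simpl; ring).
  replace (IZR (2*t+1) * w n) with (PI / 2 - IZR (2 * (Z.of_nat h - t)) * w n) by (rewrite HPI, HnR; zR; field).
  rewrite cos_shift, sin_shift.
  pose proof (FT_even n h ms (Z.of_nat h - t) Hn Hh H1 H2). lra.
Qed.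


Definition Xc n (i j k l : Z) (P : R) : R :=
  cos (IZR (4*i) * w n - P) - cos (IZR (4*j) * w n - P) + cos (IZR (4*k) * w n - P) - cos (IZR (4*l) * w n - P).

Lemma Xc_shift n i j k l P : Xc n i j k l (P + PI) = - Xc n i j k l P.
Proof. unfold Xc.
  replace (IZR (4*i) * w n - (P + PI)) with ((IZR (4*i) * w n - P) - PI) by ring.
  replace (IZR (4*j) * w n - (P + PI)) with ((IZR (4*j) * w n - P) - PI) by ring.
  replace (IZR (4*k) * w n - (P + PI)) with ((IZR (4*k) * w n - P) - PI) by ring.
  replace (IZR (4*l) * w n - (P + PI)) with ((IZR (4*l) * w n - P) - PI) by ring.
  rewrite !cos_mPI. ring. Qed.

Lemma pair_sum A Q Q' : cos (A - 2*Q) + cos (A - 2*Q') = 2 * cos (Q - Q') * cos (A - (Q + Q')).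
Proof. rewrite form1.
  replace ((A - 2 * Q - (A - 2 * Q')) / 2) with (- (Q - Q')) by field.
  replace ((A - 2 * Q + (A - 2 * Q')) / 2) with (A - (Q + Q')) by field.
  rewrite cos_neg. ring. Qed.

Lemma pair_diff A Q Q' : cos (A - 2*Q) - cos (A - 2*Q') = 2 * sin (Q - Q') * sin (A - (Q + Q')).
Proof. rewrite form2.
  replace ((A - 2 * Q - (A - 2 * Q')) / 2) with (- (Q - Q')) by field.
  replace ((A - 2 * Q + (A - 2 * Q')) / 2) with (A - (Q + Q')) by field.
  rewrite sin_neg. ring. Qed.

Lemma absb a x R : -R <= x <= R -> a * x <= Rabs a * R.
Proof. intros H. destruct (Rle_dec 0 a).
  - rewrite Rabs_pos_eq by auto. apply Rmult_le_compat_l; lra.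
  - rewrite Rabs_left by lra. nra. Qed.

Lemma CT n h ms (i j k l q q' : Z) : n = (2*h+1)%nat -> (1 <= h)%nat -> (4*ms <= n+1)%nat -> (n <= 4*ms+1)%nat ->
  kap n * (Xc n i j k l (IZR (2*q) * w n) + Xc n i j l k (IZR (2*q') * w n)) <= 2 * Gs n ms.
Proof.
  intros Hn Hh H1 H2.
  assert (Hn3 : (3 <= n)%nat) by lia.
  pose proof (cosw_pos n Hn3) as Hc.
  pose proof (kap_pos n Hn3) as Hk.
  assert (Hke : kap n = / (2 * cos (w n) ^ 2)) by (unfold kap; rewrite (one_cos2w n); reflexivity).
  assert (Hk1 : kap n * (1 + cos (2 * w n)) = 1) by (unfold kap; field; pose proof (cos2w_pos n Hn3); lra).
  assert (Hk2 : kap n * (2 * cos (w n)) = / cos (w n)) by (rewrite Hke; field; lra).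
  assert (Hdec : Xc n i j k l (IZR (2*q) * w n) + Xc n i j l k (IZR (2*q') * w n) =
     2 * cos (IZR (q - q') * w n) * (cos (IZR (4*i - (q+q')) * w n) - cos (IZR (4*j - (q+q')) * w n)) +
     2 * sin (IZR (q - q') * w n) * (sin (IZR (4*k - (q+q')) * w n) - sin (IZR (4*l - (q+q')) * w n))).
  { unfold Xc.
    replace (IZR (2*q) * w n) with (2 * (IZR q * w n)) by (zR; ring).
    replace (IZR (2*q') * w n) with (2 * (IZR q' * w n)) by (zR; ring).
    replace (IZR (q - q') * w n) with (IZR q * w n - IZR q' * w n) by (zR; ring).
    replace (IZR (4*i - (q+q')) * w n) with (IZR (4*i) * w n - (IZR q * w n + IZR q' * w n)) by (zR; ring).
    replace (IZR (4*j - (q+q')) * w n) with (IZR (4*j) * w n - (IZR q * w n + IZR q' * w n)) by (zR; ring).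
    replace (IZR (4*k - (q+q')) * w n) with (IZR (4*k) * w n - (IZR q * w n + IZR q' * w n)) by (zR; ring).
    replace (IZR (4*l - (q+q')) * w n) with (IZR (4*l) * w n - (IZR q * w n + IZR q' * w n)) by (zR; ring).
    pose proof (pair_sum (IZR (4*i) * w n) (IZR q * w n) (IZR q' * w n)).
    pose proof (pair_sum (IZR (4*j) * w n) (IZR q * w n) (IZR q' * w n)).
    pose proof (pair_diff (IZR (4*k) * w n) (IZR q * w n) (IZR q' * w n)).
    pose proof (pair_diff (IZR (4*l) * w n) (IZR q * w n) (IZR q' * w n)).
    lra. }
  rewrite Hdec.
  destruct (Z.Even_or_Odd (q + q')) as [[sg E]|[sg E]]; rewrite E.
  - pose proof (K1even n h sg i j Hn). pose proof (K1even n h sg j i Hn).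
    pose proof (K2even n h sg k l Hn). pose proof (K2even n h sg l k Hn).
    pose proof (absb (2 * cos (IZR (q - q') * w n)) (cos (IZR (4 * i - 2 * sg) * w n) - cos (IZR (4 * j - 2 * sg) * w n)) (1 + cos (2 * w n)) ltac:(lra)) as A1.
    pose proof (absb (2 * sin (IZR (q - q') * w n)) (sin (IZR (4 * k - 2 * sg) * w n) - sin (IZR (4 * l - 2 * sg) * w n)) (2 * cos (w n)) ltac:(lra)) as A2.
    rewrite Rabs_mult, (Rabs_pos_eq 2) in A1, A2 by lra.
    pose proof (FT_even n h ms (q - sg) Hn Hh H1 H2) as F.
    replace (2 * (q - sg))%Z with (q - q')%Z in F by lia.
    apply Rmult_le_compat_l with (r := kap n) in A1; [|lra].
    apply Rmult_le_compat_l with (r := kap n) in A2; [|lra].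
    replace (kap n * (2 * Rabs (cos (IZR (q - q') * w n)) * (1 + cos (2 * w n)))) with
      (2 * Rabs (cos (IZR (q - q') * w n)) * (kap n * (1 + cos (2 * w n)))) in A1 by ring.
    replace (kap n * (2 * Rabs (sin (IZR (q - q') * w n)) * (2 * cos (w n)))) with
      (2 * Rabs (sin (IZR (q - q') * w n)) * (kap n * (2 * cos (w n)))) in A2 by ring.
    rewrite Hk1 in A1. rewrite Hk2 in A2. unfold Rdiv in F. lra.
  - pose proof (K1odd n h sg i j Hn). pose proof (K1odd n h sg j i Hn).
    pose proof (K2odd n h sg k l Hn). pose proof (K2odd n h sg l k Hn).
    pose proof (absb (2 * cos (IZR (q - q') * w n)) (cos (IZR (4 * i - (2 * sg + 1)) * w n) - cos (IZR (4 * j - (2 * sg + 1)) * w n)) (2 * cos (w n)) ltac:(lra)) as A1.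
    pose proof (absb (2 * sin (IZR (q - q') * w n)) (sin (IZR (4 * k - (2 * sg + 1)) * w n) - sin (IZR (4 * l - (2 * sg + 1)) * w n)) (1 + cos (2 * w n)) ltac:(lra)) as A2.
    rewrite Rabs_mult, (Rabs_pos_eq 2) in A1, A2 by lra.
    pose proof (FT_odd n h ms (q - sg - 1) Hn Hh H1 H2) as F.
    replace (2 * (q - sg - 1) + 1)%Z with (q - q')%Z in F by lia.
    apply Rmult_le_compat_l with (r := kap n) in A1; [|lra].
    apply Rmult_le_compat_l with (r := kap n) in A2; [|lra].
    replace (kap n * (2 * Rabs (cos (IZR (q - q') * w n)) * (2 * cos (w n)))) with
      (2 * Rabs (cos (IZR (q - q') * w n)) * (kap n * (2 * cos (w n)))) in A1 by ring.
    replace (kap n * (2 * Rabs (sin (IZR (q - q') * w n)) * (1 + cos (2 * w n)))) with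
      (2 * Rabs (sin (IZR (q - q') * w n)) * (kap n * (1 + cos (2 * w n)))) in A2 by ring.
    rewrite Hk1 in A2. rewrite Hk2 in A1. unfold Rdiv in F. lra.
Qed.


Lemma comb la mu X1 X2 : 0 <= la -> 0 <= mu -> la + mu <= 1 ->
  la*X1 + mu*X2 <= X1 \/ la*X1 + mu*X2 <= X2 \/ la*X1 + mu*X2 <= -X1.
Proof. intros. destruct (Rle_dec X2 X1).
  - destruct (Rle_dec 0 X1).
    + left. nra.
    + right; right. nra.
  - destruct (Rle_dec 0 X2).
    + right; left. nra.
    + right; right. nra.
Qed.

Lemma comb_ex n i j k l p la mu : (1 <= n)%nat -> 0 <= la -> 0 <= mu -> la + mu <= 1 ->
  exists q, la * Xc n i j k l (IZR (2*p) * w n) + mu * Xc n i j k l (IZR (2*p+2) * w n)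
            <= Xc n i j k l (IZR (2*q) * w n).
Proof. intros Hn H1 H2 H3.
  destruct (comb la mu (Xc n i j k l (IZR (2*p) * w n)) (Xc n i j k l (IZR (2*p+2) * w n)) H1 H2 H3)
    as [A|[A|A]].
  - exists p. exact A.
  - exists (p+1)%Z. replace (2 * (p+1))%Z with (2*p+2)%Z by ring. exact A.
  - exists (p + Z.of_nat n)%Z.
    replace (IZR (2 * (p + Z.of_nat n)) * w n) with (IZR (2*p) * w n + PI)
      by (rewrite (PI_w n Hn); zR; ring).
    rewrite Xc_shift. exact A.
Qed.

Lemma val_lin n e1 e2 e3 a : val n (e1, e2, e3) a =
  rn n * (e1 * cos (IZR (4*a) * w n) + e2 * sin (IZR (4*a) * w n)) + e3.
Proof. unfold val. ring. Qed.

Lemma CI n h ms e f (i j k l : Z) : n = (2*h+1)%nat -> (1 <= h)%nat -> (4*ms <= n+1)%nat -> (n <= 4*ms+1)%nat ->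
  (forall a, 0 <= val n e a <= 1) -> (forall a, 0 <= val n f a <= 1) ->
  (val n e i + val n f i) - (val n e j + val n f j) + (val n e k - val n f k) - (val n e l - val n f l)
    <= 2 * Gs n ms.
Proof.
  intros Hn Hh H1 H2 He Hf.
  destruct e as [[e1 e2] e3]. destruct f as [[f1 f2] f3].
  destruct (sector n h e1 e2 e3 Hn Hh He) as [p [la [mu [Hla [Hmu [Hlm Id]]]]]].
  destruct (sector n h f1 f2 f3 Hn Hh Hf) as [p' [la' [mu' [Hla' [Hmu' [Hlm' Id']]]]]].
  rewrite !val_lin, !Id, !Id'.
  destruct (comb_ex n i j k l p la mu ltac:(lia) Hla Hmu Hlm) as [q Hq].
  destruct (comb_ex n i j l k p' la' mu' ltac:(lia) Hla' Hmu' Hlm') as [q' Hq'].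
  pose proof (CT n h ms i j k l q q' Hn Hh H1 H2) as Hct.
  pose proof (kap_pos n ltac:(lia)) as Hk.
  unfold Xc in Hq, Hq', Hct.
  set (K := kap n) in *.
  set (W := w n) in *.
  assert (E : K * (la * (cos (IZR (4 * i) * W - IZR (2 * p) * W) - cos (IZR (4 * j) * W - IZR (2 * p) * W) +
       cos (IZR (4 * k) * W - IZR (2 * p) * W) - cos (IZR (4 * l) * W - IZR (2 * p) * W)) +
       mu * (cos (IZR (4 * i) * W - IZR (2 * p + 2) * W) - cos (IZR (4 * j) * W - IZR (2 * p + 2) * W) +
       cos (IZR (4 * k) * W - IZR (2 * p + 2) * W) - cos (IZR (4 * l) * W - IZR (2 * p + 2) * W)))
     <= K * (cos (IZR (4 * i) * W - IZR (2 * q) * W) - cos (IZR (4 * j) * W - IZR (2 * q) * W) +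
       cos (IZR (4 * k) * W - IZR (2 * q) * W) - cos (IZR (4 * l) * W - IZR (2 * q) * W)))
    by (apply Rmult_le_compat_l; lra).
  assert (E' : K * (la' * (cos (IZR (4 * i) * W - IZR (2 * p') * W) - cos (IZR (4 * j) * W - IZR (2 * p') * W) +
       cos (IZR (4 * l) * W - IZR (2 * p') * W) - cos (IZR (4 * k) * W - IZR (2 * p') * W)) +
       mu' * (cos (IZR (4 * i) * W - IZR (2 * p' + 2) * W) - cos (IZR (4 * j) * W - IZR (2 * p' + 2) * W) +
       cos (IZR (4 * l) * W - IZR (2 * p' + 2) * W) - cos (IZR (4 * k) * W - IZR (2 * p' + 2) * W)))
     <= K * (cos (IZR (4 * i) * W - IZR (2 * q') * W) - cos (IZR (4 * j) * W - IZR (2 * q') * W) +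
       cos (IZR (4 * l) * W - IZR (2 * q') * W) - cos (IZR (4 * k) * W - IZR (2 * q') * W)))
    by (apply Rmult_le_compat_l; lra).
  lra.
Qed.


Lemma dot_proj g1 g2 g3 v : dot (g1, g2, g3) v = g1 * fst (fst v) + g2 * snd (fst v) + g3 * snd v.
Proof. destruct v as [[x y] z]. reflexivity. Qed.

Lemma sum_lin (lam a b c : nat -> R) g1 g2 g3 N :
  sum_f_R0 (fun k => lam k * (g1 * a k + g2 * b k + g3 * c k)) N =
  g1 * sum_f_R0 (fun k => lam k * a k) N + g2 * sum_f_R0 (fun k => lam k * b k) N
  + g3 * sum_f_R0 (fun k => lam k * c k) N.
Proof. induction N; simpl. ring. rewrite IHN. ring. Qed.

Lemma dot_conv n g s (lam : nat -> R) :
  s = (sum_f_R0 (fun k => lam k * fst (fst (vertex n (S k)))) (n - 1),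
       sum_f_R0 (fun k => lam k * snd (fst (vertex n (S k)))) (n - 1),
       sum_f_R0 (fun k => lam k * snd (vertex n (S k))) (n - 1)) ->
  dot g s = sum_f_R0 (fun k => lam k * dot g (vertex n (S k))) (n - 1).
Proof. intros ->. destruct g as [[g1 g2] g3].
  rewrite dot_proj. simpl fst. simpl snd.
  rewrite <- sum_lin. apply sum_eq. intros i _. rewrite dot_proj. reflexivity. Qed.

Lemma sum_bound (lam v : nat -> R) lo hi N :
  (forall k, (k <= N)%nat -> lo <= v k <= hi) -> (forall k, 0 <= lam k) ->
  lo * sum_f_R0 lam N <= sum_f_R0 (fun k => lam k * v k) N <= hi * sum_f_R0 lam N.
Proof. intros Hv Hl. induction N; simpl.
  - pose proof (Hv 0%nat ltac:(lia)). pose proof (Hl 0%nat). split; nra.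
  - assert (IH : lo * sum_f_R0 lam N <= sum_f_R0 (fun k => lam k * v k) N <= hi * sum_f_R0 lam N)
      by (apply IHN; intros; apply Hv; lia).
    pose proof (Hv (S N) ltac:(lia)). pose proof (Hl (S N)). split; nra.
Qed.

Lemma conv_bound n g s lo hi : (1 <= n)%nat -> in_Sn n s ->
  (forall k, (k < n)%nat -> lo <= dot g (vertex n (S k)) <= hi) -> lo <= dot g s <= hi.
Proof. intros Hn [lam [Hl [Hs E]]] Hv.
  rewrite (dot_conv n g s lam E).
  pose proof (sum_bound lam (fun k => dot g (vertex n (S k))) lo hi (n-1)) as B.
  rewrite Hs in B. rewrite !Rmult_1_r in B. apply B; auto.
  intros k Hk. apply Hv. lia. Qed.

Lemma sum_delta (a : nat -> R) k N :
  sum_f_R0 (fun j => (if Nat.eqb j k then 1 else 0) * a j) N = if Nat.leb k N then a k else 0.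
Proof. induction N.
  - simpl. destruct k; simpl; ring.
  - rewrite tech5. cbv beta. rewrite IHN. destruct (Nat.leb k N) eqn:E1; destruct (Nat.eqb (S N) k) eqn:E2;
    destruct (Nat.leb k (S N)) eqn:E3;
    rewrite ?Nat.eqb_eq, ?Nat.eqb_neq, ?Nat.leb_le, ?Nat.leb_gt in *;
    try (subst k); try ring; try lia.
Qed.

Lemma vertex_in n k : (k < n)%nat -> in_Sn n (vertex n (S k)).
Proof. intros Hk. exists (fun j => if Nat.eqb j k then 1 else 0). split; [|split].
  - intros j. destruct (Nat.eqb j k); lra.
  - pose proof (sum_delta (fun _ => 1) k (n-1)) as E. simpl in E.
    replace (fun j : nat => if (j =? k)%nat then 1 else 0) with
      (fun j : nat => (if (j =? k)%nat then 1 else 0) * 1)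
      by (apply FunctionalExtensionality.functional_extensionality; intros; ring).
    rewrite E. replace (Nat.leb k (n-1)) with true by (symmetry; apply Nat.leb_le; lia). reflexivity.
  - rewrite !sum_delta. replace (Nat.leb k (n-1)) with true by (symmetry; apply Nat.leb_le; lia).
    destruct (vertex n (S k)) as [[x y] z]. reflexivity.
Qed.

Lemma argmax (F : nat -> R) N : exists k, (k <= N)%nat /\ forall k', (k' <= N)%nat -> F k' <= F k.
Proof. induction N.
  - exists 0%nat. split; auto. intros k' Hk'. replace k' with 0%nat by lia. lra.
  - destruct IHN as [k [Hk Hm]]. destruct (Rle_dec (F (S N)) (F k)).
    + exists k. split; [lia|]. intros k' Hk'. destruct (Nat.eq_dec k' (S N)); [subst; auto|]. apply Hm; lia.
    + exists (S N). split; [lia|]. intros k' Hk'. destruct (Nat.eq_dec k' (S N)); [subst; lra|].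
      pose proof (Hm k' ltac:(lia)). lra.
Qed.

Lemma fnorm_eq n g B : (1 <= n)%nat ->
  (forall k, (k < n)%nat -> Rabs (dot g (vertex n (S k))) <= B) ->
  (exists k, (k < n)%nat /\ Rabs (dot g (vertex n (S k))) = B) -> fnorm n g = B.
Proof. intros Hn Hb [k0 [Hk0 E0]]. unfold fnorm.
  assert (H : is_lub_Rbar (fun y => exists s, in_Sn n s /\ y = Rabs (dot g s)) (Finite B)).
  { split.
    - intros x [s [Hs ->]]. simpl.
      assert (-B <= dot g s <= B).
      { apply (conv_bound n g s); auto. intros k Hk. pose proof (Hb k Hk) as X.
        pose proof (Rle_abs (dot g (vertex n (S k)))). pose proof (Rle_abs (- dot g (vertex n (S k)))).
        rewrite Rabs_Ropp in *. lra. }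
      apply Rabs_le. lra.
    - intros b Hub. apply (Hub B). exists (vertex n (S k0)). split; auto. apply vertex_in; auto. }
  rewrite (is_lub_Rbar_unique _ _ H). reflexivity.
Qed.

Lemma fnorm_vertex n g : (1 <= n)%nat -> exists k, (k < n)%nat /\ fnorm n g = Rabs (dot g (vertex n (S k))).
Proof. intros Hn. destruct (argmax (fun k => Rabs (dot g (vertex n (S k)))) (n-1)) as [k [Hk Hm]].
  exists k. split; [lia|]. apply fnorm_eq; auto.
  - intros k' Hk'. apply Hm. lia.
  - exists k. split; auto; lia.
Qed.

Lemma effect_vertex n e k : is_effect n e -> (k < n)%nat -> 0 <= dot e (vertex n (S k)) <= 1.
Proof. intros He Hk. apply He. apply vertex_in; auto. Qed.

Lemma effect_of_vertex n e : (1 <= n)%nat -> (forall k, (k < n)%nat -> 0 <= dot e (vertex n (S k)) <= 1) -> is_effect n e.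
Proof. intros Hn Hv s Hs. apply (conv_bound n e s 0 1 Hn Hs Hv). Qed.


Lemma val_vadd n x y a : val n (vadd x y) a = val n x a + val n y a.
Proof. destruct x as [[x1 x2] x3]; destruct y as [[y1 y2] y3]. unfold vadd, val. ring. Qed.

Lemma dot_vadd x y v : dot (vadd x y) v = dot x v + dot y v.
Proof. destruct x as [[x1 x2] x3]; destruct y as [[y1 y2] y3]; destruct v as [[v1 v2] v3].
  unfold vadd, dot. ring. Qed.

Lemma fnorm_val n g B : (1 <= n)%nat -> (forall a, Rabs (val n g a) <= B) ->
  (exists a, Rabs (val n g a) = B) -> fnorm n g = B.
Proof. intros Hn Hb [a Ha]. apply fnorm_eq; auto.
  - intros k Hk. rewrite dot_vertex by auto. apply Hb.
  - destruct (vred n g a Hn) as [k [Hk E]]. exists k. split; auto.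
    rewrite dot_vertex by auto. rewrite <- E. auto.
Qed.

Lemma Vform n ms : (1 <= n)%nat ->
  / 4 * (2 + cos (INR ms * PI / INR n) + / cos (PI / (2 * INR n)) * sin (INR ms * PI / INR n))
  = / 4 * (2 + Gs n ms).
Proof. intros Hn. unfold Gs.
  assert (1 <= INR n) by (apply (le_INR 1); lia).
  replace (INR ms * PI / INR n) with (2 * INR ms * w n) by (unfold w; field; lra).
  fold (w n). unfold Rdiv. ring. Qed.

Lemma UB n h ms M1p M1m M2p M2m : n = (2*h+1)%nat -> (1 <= h)%nat -> (4*ms <= n+1)%nat -> (n <= 4*ms+1)%nat ->
  dichotomic n M1p M1m -> dichotomic n M2p M2m ->
  Pbar n M1p M1m M2p M2m <= / 4 * (2 + Gs n ms).
Proof.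
  intros Hn Hh H1 H2 [E1p [E1m U1]] [E2p [E2m U2]].
  assert (Hn1 : (1 <= n)%nat) by lia.
  assert (Hu : forall a, val n unit_effect a = 1) by (intros; unfold val, unit_effect; ring).
  assert (Hm1 : forall a, val n M1m a = 1 - val n M1p a).
  { intros a. rewrite <- (Hu a), <- U1, val_vadd. ring. }
  assert (Hm2 : forall a, val n M2m a = 1 - val n M2p a).
  { intros a. rewrite <- (Hu a), <- U2, val_vadd. ring. }
  assert (Ve : forall g, is_effect n g -> forall a, 0 <= val n g a <= 1).
  { intros g Hg. apply val_all; auto. intros k Hk. rewrite <- dot_vertex by auto.
    apply effect_vertex; auto. }
  pose proof (Ve _ E1p) as A. pose proof (Ve _ E2p) as B.
  destruct (fnorm_vertex n (vadd M1p M2p) Hn1) as [k1 [_ F1]].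
  destruct (fnorm_vertex n (vadd M1p M2m) Hn1) as [k2 [_ F2]].
  destruct (fnorm_vertex n (vadd M1m M2p) Hn1) as [k3 [_ F3]].
  destruct (fnorm_vertex n (vadd M1m M2m) Hn1) as [k4 [_ F4]].
  rewrite dot_vertex, val_vadd in F1, F2, F3, F4 by auto.
  rewrite Hm2 in F2. rewrite Hm1 in F3. rewrite Hm1, Hm2 in F4.
  set (i := Z.of_nat (S k1)) in *. set (j := Z.of_nat (S k4)) in *.
  set (k := Z.of_nat (S k2)) in *. set (l := Z.of_nat (S k3)) in *.
  pose proof (A i). pose proof (B i). pose proof (A j). pose proof (B j).
  pose proof (A k). pose proof (B k). pose proof (A l). pose proof (B l).
  rewrite Rabs_pos_eq in F1, F2, F3, F4 by lra.
  pose proof (CI n h ms M1p M2p i j k l Hn Hh H1 H2 A B) as C.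
  unfold Pbar. rewrite F1, F2, F3, F4. lra.
Qed.


Lemma eff_ok n h (N : Z) (b : bool) : n = (2*h+1)%nat -> (3 <= n)%nat -> Z.even N = b ->
  0 <= kap n * cos (IZR (2*N) * w n) + (if b then 1 - kap n else kap n) <= 1.
Proof. intros Hnh Hn HN.
  assert (HnR : INR n = 2 * INR h + 1) by (subst n; rewrite plus_INR, mult_INR; simpl; ring).
  pose proof (kap_pos n Hn) as Hk.
  pose proof (PI_w n ltac:(lia)) as HPI.
  assert (Hk1 : kap n * (1 + cos (2 * w n)) = 1) by (unfold kap; field; pose proof (cos2w_pos n Hn); lra).
  destruct (Z.Even_or_Odd N) as [[u E]|[u E]]; subst N.
  - rewrite Z.even_mul in HN. simpl in HN. subst b.
    pose proof (COS_bound (IZR (2 * (2 * u)) * w n)).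
    assert (X : - cos (IZR (2 * (2 * u)) * w n) <= cos (2 * w n)).
    { rewrite mcos_as_cos.
      replace (IZR (2 * (2 * u)) * w n - PI) with (IZR (2 * (2 * (u - Z.of_nat h - 1) + 1)) * w n) by (rewrite HPI, HnR; zR; ring).
      apply KLw2. lia. }
    split; nra.
  - replace (Z.even (2*u+1)) with false in HN by (rewrite Z.even_add, Z.even_mul; reflexivity). subst b.
    pose proof (COS_bound (IZR (2 * (2 * u + 1)) * w n)).
    pose proof (KLw2 n u ltac:(lia)).
    split; nra.
Qed.

Lemma sin_zero_half n ms : (1 <= n)%nat -> (4*ms <= n+1)%nat -> (3 <= n)%nat ->
  0 <= cos (2 * INR ms * w n) /\ 0 <= sin (2 * INR ms * w n).
Proof. intros Hn H1 H3.
  pose proof (w_pos n Hn) as Wp. pose proof (PI_w n Hn) as HPI.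
  assert (HmsR : 4 * INR ms <= INR n + 1).
  { replace (4 * INR ms) with (INR (4*ms)) by (rewrite mult_INR; simpl; ring).
    replace (INR n + 1) with (INR (n+1)) by (rewrite plus_INR; simpl; ring). apply le_INR; lia. }
  assert (3 <= INR n) by (pose proof (le_INR 3 n ltac:(lia)); simpl in *; lra).
  pose proof (pos_INR ms).
  assert (0 <= 2 * INR ms * w n <= PI / 2).
  { split. apply Rmult_le_pos; lra. rewrite HPI. replace (2 * INR n * w n / 2) with (INR n * w n) by field.
    apply lin_W; lra. }
  split; [apply cos_ge_0 | apply sin_ge_0]; pose proof PI_RGT_0; lra.
Qed.

Lemma LB n h ms : n = (2*h+1)%nat -> (1 <= h)%nat -> (4*ms = n - 1 \/ 4*ms = n+1)%nat ->
  exists M1p M1m M2p M2m, dichotomic n M1p M1m /\ dichotomic n M2p M2m /\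
    Pbar n M1p M1m M2p M2m = / 4 * (2 + Gs n ms).
Proof.
  intros Hn Hh Hms.
  assert (Hn3 : (3 <= n)%nat) by lia. assert (Hn1 : (1 <= n)%nat) by lia.
  pose proof (kap_pos n Hn3) as Hk.
  pose proof (rn_pos n Hn3) as Hr.
  pose proof (PI_w n Hn1) as HPI.
  pose proof (cosw_pos n Hn3) as Hc.
  assert (HnR : INR n = 2 * INR h + 1) by (subst n; rewrite plus_INR, mult_INR; simpl; ring).
  assert (Hk1 : kap n * (1 + cos (2 * w n)) = 1) by (unfold kap; field; pose proof (cos2w_pos n Hn3); lra).
  assert (Hke : kap n = / (2 * cos (w n) ^ 2)) by (unfold kap; rewrite (one_cos2w n); reflexivity).
  destruct (sin_zero_half n ms Hn1 ltac:(lia) Hn3) as [HC HS].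
  set (W := w n) in *. set (K := kap n) in *.
  set (C := cos (2 * INR ms * W)) in *. set (S := sin (2 * INR ms * W)) in *.
  set (b := Z.even (Z.of_nat ms)).
  set (beta := if b then 1 - K else K).
  set (e := (K / rn n * C, K / rn n * S, beta)).
  set (f := (K / rn n * C, - (K / rn n * S), beta)).
  set (e' := (- (K / rn n * C), - (K / rn n * S), 1 - beta)).
  set (f' := (- (K / rn n * C), K / rn n * S, 1 - beta)).
  assert (Ve : forall a, val n e a = K * cos (IZR (2 * (2*a - Z.of_nat ms)) * W) + beta).
  { intros a. unfold val, e. fold W.
    replace (IZR (2 * (2*a - Z.of_nat ms)) * W) with (IZR (4*a) * W - 2 * INR ms * W) by (zR; ring).
    rewrite cos_minus. unfold C, S. field. lra. }
  assert (Vf : forall a, val n f a = K * cos (IZR (2 * (2*a + Z.of_nat ms)) * W) + beta).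
  { intros a. unfold val, f. fold W.
    replace (IZR (2 * (2*a + Z.of_nat ms)) * W) with (IZR (4*a) * W + 2 * INR ms * W) by (zR; ring).
    rewrite cos_plus. unfold C, S. field. lra. }
  assert (Ve' : forall a, val n e' a = 1 - val n e a) by (intros a; unfold val, e, e'; ring).
  assert (Vf' : forall a, val n f' a = 1 - val n f a) by (intros a; unfold val, f, f'; ring).
  assert (Be : forall a, 0 <= val n e a <= 1).
  { intros a. rewrite Ve. apply (eff_ok n h); auto. unfold b.
    rewrite Z.even_sub, Z.even_mul. simpl. destruct (Z.even (Z.of_nat ms)); reflexivity. }
  assert (Bf : forall a, 0 <= val n f a <= 1).
  { intros a. rewrite Vf. apply (eff_ok n h); auto. unfold b.
    rewrite Z.even_add, Z.even_mul. simpl. destruct (Z.even (Z.of_nat ms)); reflexivity. }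
  assert (Eff : forall g, (forall a, 0 <= val n g a <= 1) -> is_effect n g).
  { intros g Hg. apply effect_of_vertex; auto. intros k Hk'. rewrite dot_vertex by auto. apply Hg. }
  assert (Sum : forall a, val n e a + val n f a = 2 * K * C * cos (IZR (4*a) * W) + 2 * beta).
  { intros a. unfold val, e, f. fold W. field. lra. }
  assert (Dif : forall a, val n e a - val n f a = 2 * K * S * sin (IZR (4*a) * W)).
  { intros a. unfold val, e, f. fold W. field. lra. }
  exists e, e', f, f'.
  split; [|split].
  - split; [apply Eff; auto|split].
    + apply Eff. intros a. rewrite Ve'. pose proof (Be a). lra.
    + unfold vadd, e, e', unit_effect. f_equal; [f_equal|]; ring.
  - split; [apply Eff; auto|split].
    + apply Eff. intros a. rewrite Vf'. pose proof (Bf a). lra.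
    + unfold vadd, f, f', unit_effect. f_equal; [f_equal|]; ring.
  -
    assert (N1 : fnorm n (vadd e f) = 2 * K * C + 2 * beta).
    { apply fnorm_val; auto.
      - intros a. rewrite val_vadd. pose proof (Be a). pose proof (Bf a).
        rewrite Rabs_pos_eq by lra. rewrite Sum.
        pose proof (COS_bound (IZR (4 * a) * W)). assert (0 <= K * C) by (apply Rmult_le_pos; lra). nra.
      - exists (Z.of_nat n). rewrite val_vadd. pose proof (Be (Z.of_nat n)). pose proof (Bf (Z.of_nat n)).
        rewrite Rabs_pos_eq by lra. rewrite Sum.
        replace (IZR (4 * Z.of_nat n) * W) with (0 + 2 * IZR 1 * PI) by (rewrite HPI; zR; simpl; ring).
        rewrite cos_perZ, cos_0. ring. }
    assert (N4 : fnorm n (vadd e' f') = 2 - 2 * beta + 2 * K * C * cos (2 * W)).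
    { apply fnorm_val; auto.
      - intros a. rewrite val_vadd, Ve', Vf'. pose proof (Be a). pose proof (Bf a).
        rewrite Rabs_pos_eq by lra.
        assert (X : - cos (IZR (4 * a) * W) <= cos (2 * W)).
        { rewrite mcos_as_cos.
          replace (IZR (4 * a) * W - PI) with (IZR (2 * (2 * (a - Z.of_nat h - 1) + 1)) * W) by (rewrite HPI, HnR; zR; ring).
          apply KLw2. lia. }
        pose proof (Sum a). assert (0 <= K * C) by (apply Rmult_le_pos; lra). nra.
      - exists (Z.of_nat h + 1)%Z. rewrite val_vadd, Ve', Vf'.
        pose proof (Be (Z.of_nat h + 1)%Z). pose proof (Bf (Z.of_nat h + 1)%Z).
        rewrite Rabs_pos_eq by lra.
        replace (1 - val n e (Z.of_nat h + 1) + (1 - val n f (Z.of_nat h + 1))) with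
          (2 - (val n e (Z.of_nat h + 1) + val n f (Z.of_nat h + 1))) by ring.
        rewrite Sum.
        replace (IZR (4 * (Z.of_nat h + 1)) * W) with (2 * W + PI) by (rewrite HPI, HnR; zR; ring).
        rewrite neg_cos. ring. }
    assert (Hsw : forall a, sin (IZR (4 * a) * W) <= cos W).
    { intros a. rewrite sin_as_cos.
      replace (IZR (4 * a) * W - PI / 2) with (IZR (2 * (2 * a - Z.of_nat h - 1) + 1) * W) by (rewrite HPI, HnR; zR; field).
      apply KLw1; auto. }
    assert (Hmsw : forall a, - sin (IZR (4 * a) * W) <= cos W).
    { intros a. rewrite msin_as_cos.
      replace (IZR (4 * a) * W + PI / 2) with (IZR (2 * (2 * a + Z.of_nat h) + 1) * W) by (rewrite HPI, HnR; zR; field).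
      apply KLw1; auto. }
    assert (Hsms : sin (IZR (4 * Z.of_nat ms) * W) = cos W).
    { destruct Hms as [Hm|Hm].
      - replace (IZR (4 * Z.of_nat ms) * W) with (PI / 2 - W).
        + apply sin_shift.
        + rewrite HPI. replace (IZR (4 * Z.of_nat ms)) with (INR n - 1).
          * field.
          * rewrite mult_IZR, <- INR_IZR_INZ. replace (4 * INR ms) with (INR (4*ms)) by (rewrite mult_INR; simpl; ring).
            rewrite Hm, minus_INR by lia. simpl. ring.
      - replace (IZR (4 * Z.of_nat ms) * W) with (PI / 2 - (- W)).
        + rewrite sin_shift, cos_neg. reflexivity.
        + rewrite HPI. replace (IZR (4 * Z.of_nat ms)) with (INR n + 1).
          * field.
          * rewrite mult_IZR, <- INR_IZR_INZ. replace (4 * INR ms) with (INR (4*ms)) by (rewrite mult_INR; simpl; ring).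
            rewrite Hm, plus_INR. simpl. ring. }
    assert (N2 : fnorm n (vadd e f') = 1 + 2 * K * S * cos W).
    { apply fnorm_val; auto.
      - intros a. rewrite val_vadd, Vf'. pose proof (Be a). pose proof (Bf a).
        rewrite Rabs_pos_eq by lra.
        pose proof (Dif a). pose proof (Hsw a). assert (0 <= K * S) by (apply Rmult_le_pos; lra). nra.
      - exists (Z.of_nat ms). rewrite val_vadd, Vf'.
        pose proof (Be (Z.of_nat ms)). pose proof (Bf (Z.of_nat ms)).
        rewrite Rabs_pos_eq by lra. pose proof (Dif (Z.of_nat ms)). rewrite Hsms in *. lra. }
    assert (N3 : fnorm n (vadd e' f) = 1 + 2 * K * S * cos W).
    { apply fnorm_val; auto.
      - intros a. rewrite val_vadd, Ve'. pose proof (Be a). pose proof (Bf a).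
        rewrite Rabs_pos_eq by lra.
        pose proof (Dif a). pose proof (Hmsw a). assert (0 <= K * S) by (apply Rmult_le_pos; lra). nra.
      - exists (- Z.of_nat ms)%Z. rewrite val_vadd, Ve'.
        pose proof (Be (- Z.of_nat ms)%Z). pose proof (Bf (- Z.of_nat ms)%Z).
        rewrite Rabs_pos_eq by lra. pose proof (Dif (- Z.of_nat ms)%Z).
        replace (IZR (4 * - Z.of_nat ms) * W) with (- (IZR (4 * Z.of_nat ms) * W)) in * by (zR; ring).
        rewrite sin_neg, Hsms in *. lra. }
    unfold Pbar. rewrite N1, N2, N3, N4. unfold Gs. fold W. fold C S.
    replace (2 * K * C + 2 * beta + (1 + 2 * K * S * cos W) + (1 + 2 * K * S * cos W) +
      (2 - 2 * beta + 2 * K * C * cos (2 * W))) with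
      (4 + 2 * C * (K * (1 + cos (2 * W))) + 4 * K * S * cos W) by ring.
    rewrite Hk1. rewrite Hke. field. lra.
Qed.


Lemma gen n h ms : n = (2*h+1)%nat -> (1 <= h)%nat -> (4*ms = n - 1 \/ 4*ms = n+1)%nat ->
  is_max_Pbar n (/ 4 * (2 + cos (INR ms * PI / INR n)
            + / cos (PI / (2 * INR n)) * sin (INR ms * PI / INR n))).
Proof. intros Hn Hh Hms. rewrite Vform by lia. split.
  - apply (LB n h ms); auto.
  - intros. apply (UB n h ms); auto; lia.
Qed.

Theorem mainTheorem16 : forall m : nat, (1 <= m)%nat ->
  is_max_Pbar (4 * m + 1)
    (/ 4 * (2 + cos (INR m * PI / INR (4 * m + 1))
            + / cos (PI / (2 * INR (4 * m + 1))) * sin (INR m * PI / INR (4 * m + 1)))) /\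
  is_max_Pbar (4 * m + 3)
    (/ 4 * (2 + cos (INR (m + 1) * PI / INR (4 * m + 3))
            + / cos (PI / (2 * INR (4 * m + 3))) * sin (INR (m + 1) * PI / INR (4 * m + 3)))).
Proof.
  intros m Hm. split.
  - apply (gen _ (2*m)); lia.
  - apply (gen _ (2*m+1)); lia.
Qed.
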